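(* Let $\varGamma=\sum_{j=1}^N\mathrm{graph}(g_j)$, where $g_1,\dots,g_N$ are rational maps (not necessarily distinct), and put $D=d_1(\varGamma)=\sum_j\deg g_j$. For every $n\in\mathbb{Z}_+$, the number of repelling fixed points of $\varGamma^{\circ n}$, counted according to multiplicity, is at most $D^n+N^n$.
   Context: The $n$-th iterate is $\varGamma^{\circ n}=\sum_{(j_1,\dots,j_n)}\mathrm{graph}(g_{j_n}\circ\cdots\circ g_{j_1})$. A point $x$ is a repelling fixed point of $\varGamma^{\circ n}$ if it is a repelling fixed point of some $g_{j_n}\circ\cdots\circ g_{j_1}$. Its multiplicity is the number of index sequences $(j_1,\dots,j_n)$ for which this holds. *)

(* Defs.v *)
(* Rational maps over an algebraically closed numeric field C
   (e.g. the complex numbers), acting on the Riemann sphere  option C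
   (None = the point at infinity). *)
From HB Require Import structures.
From mathcomp Require Import all_boot all_order all_algebra.
Set Implicit Arguments. Unset Strict Implicit. Unset Printing Implicit Defensive.
Import Order.TTheory GRing.Theory Num.Theory.
Local Open Scope ring_scope.

Section RatMaps.
Variable C : numClosedFieldType.

(* A rational map z |-> p(z)/q(z), given by a pair (p, q) of polynomials. *)
Definition ratmap := ({poly C} * {poly C})%type.

Definition rdeg (g : ratmap) : nat := (maxn (size g.1) (size g.2)).-1.

Definition is_ratmap (g : ratmap) : bool := coprimep g.1 g.2 && (0 < rdeg g)%N.

(* F^h(a, b) = sum_i F_i a^i b^(d-i): homogenisation of F in degree d,
   evaluated at polynomials a, b *)
Definition homog (d : nat) (F a b : {poly C}) : {poly C} :=
  \sum_(i < d.+1) F`_i *: (a ^+ i * b ^+ (d - i)).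

Definition rcomp (g2 g1 : ratmap) : ratmap :=
  (homog (rdeg g2) g2.1 g1.1 g1.2, homog (rdeg g2) g2.2 g1.1 g1.2).

Definition rid : ratmap := ('X, 1).

(* g_{j_n} o ... o g_{j_1} for the sequence s = (j_1, ..., j_n) *)
Definition rcomp_seq (I : Type) (g : I -> ratmap) (s : seq I) : ratmap :=
  foldl (fun acc j => rcomp (g j) acc) rid s.

(* conjugate by w = 1/z :  w |-> 1 / g(1/w) *)
Definition rinvconj (g : ratmap) : ratmap :=
  let d := rdeg g in (homog d g.2 1 'X, homog d g.1 1 'X).

Definition mult_fin (g : ratmap) (z : C) : C :=
  (g.1^`() * g.2 - g.1 * g.2^`()).[z] / (g.2.[z]) ^+ 2.

Definition repelling_fixed (g : ratmap) (x : option C) : bool :=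
  match x with
  | Some z => [&& g.2.[z] != 0, g.1.[z] == z * g.2.[z] & 1 < `|mult_fin g z|]
  | None => let h := rinvconj g in
            [&& h.2.[0] != 0, h.1.[0] == 0 & 1 < `|mult_fin h 0|]
  end.

(* multiplicity of x as a repelling fixed point of Gamma^{o n}, where
   Gamma = sum_j graph(g_j): the number of index sequences (j_1,...,j_n)
   such that x is a repelling fixed point of g_{j_n} o ... o g_{j_1} *)
Definition rep_mult (N n : nat) (g : 'I_N -> ratmap) (x : option C) : nat :=
  #|[set s : n.-tuple 'I_N | repelling_fixed (rcomp_seq g s) x]|.

End RatMaps.

(* Main.v *)
Require Import Defs.
From HB Require Import structures.
From mathcomp Require Import all_boot all_order all_algebra.
From mathcomp Require Import zify ring lra.
Import Order.TTheory GRing.Theory Num.Theory.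
Local Open Scope ring_scope.

Section Aux.
Variable C : numClosedFieldType.

Lemma size_homog (d : nat) (F a b : {poly C}) :
  (size (homog d F a b) <= ((maxn (size a) (size b)).-1 * d).+1)%N.
Proof.
rewrite /homog; set e := (maxn (size a) (size b)).-1.
apply: (big_ind (fun p : {poly C} => (size p <= (e * d).+1)%N)).
- by rewrite size_poly0.
- move=> p q hp hq; apply: leq_trans (size_polyD _ _) _; by rewrite geq_max hp hq.
move=> i _; apply: leq_trans (size_scale_leq _ _) _.
apply: leq_trans (size_polyMleq _ _) _.
have h1 := size_poly_exp_leq a i; have h2 := size_poly_exp_leq b (d - i).
have ha : ((size a).-1 <= e)%N by rewrite /e; lia.
have hb : ((size b).-1 <= e)%N by rewrite /e; lia.
have hi : (i <= d)%N by rewrite -ltnS.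
have h3 : ((size a).-1 * i <= e * i)%N by rewrite leq_mul2r ha orbT.
have h4 : ((size b).-1 * (d - i) <= e * (d - i))%N by rewrite leq_mul2r hb orbT.
have h5 : (e * i + e * (d - i) = e * d)%N by rewrite -mulnDr subnKC.
lia.
Qed.

Lemma rdeg_rcomp (g2 g1 : ratmap C) : (rdeg (rcomp g2 g1) <= rdeg g2 * rdeg g1)%N.
Proof.
rewrite {1}/rdeg /rcomp /=.
have h1 := size_homog (rdeg g2) g2.1 g1.1 g1.2.
have h2 := size_homog (rdeg g2) g2.2 g1.1 g1.2.
rewrite -/(rdeg g1) in h1 h2.
rewrite mulnC; move: h1 h2; set m := (_ * _)%N; set a := size _; set b := size _; move=> h1 h2; lia.
Qed.

Lemma rdeg_rcomp_seq (I : Type) (g : I -> ratmap C) (s : seq I) acc :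
  (rdeg (foldl (fun acc j => rcomp (g j) acc) acc s) <= rdeg acc * \prod_(j <- s) rdeg (g j))%N.
Proof.
elim: s acc => [|j s IH] acc /=; first by rewrite big_nil muln1.
apply: leq_trans (IH _) _; rewrite big_cons mulnA.
by rewrite leq_mul2r (leq_trans (rdeg_rcomp _ _)) ?orbT // mulnC.
Qed.

Lemma rdeg_rid : rdeg (rid C) = 1%N.
Proof. by rewrite /rdeg /rid /= size_polyX size_poly1. Qed.


Lemma homog_at0 d (F : {poly C}) : (homog d F 1 'X).[0] = F`_d.
Proof.
rewrite /homog horner_sum big_ord_recr /= subnn expr0 expr1n mulr1 hornerZ hornerC mulr1.
rewrite big1 ?add0r // => i _.
rewrite hornerZ expr1n mul1r hornerXn expr0n.
have : (d - i)%N != 0%N by rewrite subn_eq0 -ltnNge.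
by move/negbTE => ->; rewrite mulr0.
Qed.

Lemma count_rep (h : ratmap C) (xs : seq (option C)) :
  uniq xs -> (count (repelling_fixed h) xs <= rdeg h + 1)%N.
Proof.
move=> U.
set P := h.1 - 'X * h.2.
set F := filter (repelling_fixed h) xs.
have UF : uniq F by apply: filter_uniq.
have -> : count (repelling_fixed h) xs = size F by rewrite size_filter.
case: (eqVneq P 0) => HP.
  have eq1 : h.1 = 'X * h.2 by apply/eqP; rewrite -subr_eq0 -/P HP.
  have fin : forall z, ~~ repelling_fixed h (Some z).
    move=> z /=; apply/negP => /and3P [hq _ hm].
    have E : mult_fin h z = 1.
      rewrite /mult_fin eq1 derivM derivX mul1r.
      rewrite !(hornerE, hornerM, hornerD, hornerX).
      by field.
    by rewrite E normr1 ltxx in hm.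
  apply: leq_trans (_ : size F <= size [:: (None : option C)])%N _; last by rewrite addn1.
  apply: uniq_leq_size => // x; rewrite mem_filter => /andP [hx _].
  by case: x hx => [z|] //; rewrite (negbTE (fin z)).
set rs := pmap id F.
have Urs : uniq rs by apply: (pmap_uniq (g := Some)) => // -[].
have Rrs : all (root P) rs.
  apply/allP => z; rewrite mem_pmap map_id mem_filter => /andP [/and3P [hq hp _] _].
  by rewrite /root /P !(hornerE, hornerM, hornerD, hornerX) (eqP hp) subrr.
have Hsz := max_poly_roots HP Rrs Urs.
set m := maxn (size h.1) (size h.2).
have Hd : rdeg h = m.-1 by [].
have Hm : (0 < m)%N.
  rewrite lt0n; apply/negP => /eqP m0.
  have e1 : size h.1 = 0%N by move: m0; rewrite /m; lia.
  have e2 : size h.2 = 0%N by move: m0; rewrite /m; lia.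
  move/eqP: e1; move/eqP: e2; rewrite !size_poly_eq0 => /eqP e2 /eqP e1.
  by move: HP; rewrite /P e1 e2 mulr0 subrr eqxx.
have HsP : (size P <= m.+1)%N.
  apply: leq_trans (size_polyD _ _) _; rewrite size_polyN geq_max.
  apply/andP; split; first by rewrite /m; lia.
  apply: leq_trans (size_polyMleq _ _) _; rewrite size_polyX addSn /= add1n ltnS /m; exact: leq_maxr.
have Hrs : size rs = count (fun x : option C => x) F by rewrite size_pmap.
have HF : size F = (count (fun x : option C => x) F + count (predC (fun x : option C => x)) F)%N
  by rewrite count_predC.
have HN : (count (predC (fun x : option C => x)) F <= (None \in F))%N.
  rewrite -count_uniq_mem //; by apply: sub_count => -[].
rewrite HF -Hrs Hd.
case NF: (None \in F) HN => HN; last first. { have H0 : count (predC (fun x : option C => x)) F = 0%N by apply/eqP; rewrite -leqn0. rewrite H0 addn0 addn1 prednK //; by rewrite -ltnS (leq_trans Hsz HsP). }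
move: NF; rewrite mem_filter => /andP [/and3P [_ h0 _] _].
rewrite homog_at0 -/(rdeg h) Hd in h0.
have Pm : P`_m = 0.
  rewrite /P coefB coefXM.
  have -> : (m == 0%N) = false by apply/negbTE; rewrite -lt0n.
  by rewrite (eqP h0) nth_default ?subr0 // /m leq_maxl.
have : size P != m.+1.
  apply/negP => /eqP E.
  by move: HP; rewrite -lead_coef_eq0 lead_coefE E /= Pm eqxx.
move=> E.
have HsP' : (size P < m.+1)%N by rewrite ltn_neqAle E HsP.
rewrite ltnS in HsP'.
have Hr : (size rs < m)%N := leq_trans Hsz HsP'.
rewrite addn1 prednK //.
apply: leq_trans (leq_add (leqnn _) HN) _.
by rewrite /= addn1.
Qed.

End Aux.

Lemma sum_tuple_prod n N (a : 'I_N -> nat) :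
  (\sum_(s : n.-tuple 'I_N) \prod_(j <- s) a j = (\sum_(j < N) a j) ^ n)%N.
Proof.
rewrite -[in RHS](card_ord n) -prod_nat_const.
rewrite (eq_bigl (fun _ => true)) //.
rewrite bigA_distr_bigA /=.
rewrite (reindex (@finfun_of_tuple _ n)) /=; last first.
  by exists tuple_of_finfun => x _; [rewrite finfun_of_tupleK | rewrite tuple_of_finfunK].
apply: eq_bigr => s _; rewrite big_tuple; apply: eq_bigr => i _; by rewrite ffunE.
Qed.

Theorem mainTheorem7 (C : numClosedFieldType) (N : nat) (g : 'I_N -> ratmap C)
  (hg : forall j, is_ratmap (g j)) (n : nat) (hn : (0 < n)%N)
  (xs : seq (option C)) (hxs : uniq xs) :
  (\sum_(x <- xs) rep_mult n g x <= (\sum_(j < N) rdeg (g j)) ^ n + N ^ n)%N.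
Proof.
have E : (\sum_(x <- xs) rep_mult n g x =
   \sum_(s : n.-tuple 'I_N) count (repelling_fixed (rcomp_seq g s)) xs)%N.
  rewrite /rep_mult.
  under eq_bigr => x _ do rewrite -sum1_card.
  under eq_bigr => x _ do rewrite big_mkcond /=.
  rewrite exchange_big /=; apply: eq_bigr => s _.
  rewrite -sum1_count [RHS]big_mkcond /=; apply: eq_bigr => x _.
  by rewrite inE.
have E2 : (N ^ n = \sum_(s : n.-tuple 'I_N) 1)%N.
  by rewrite sum1_card card_tuple card_ord.
rewrite E -sum_tuple_prod E2 -big_split /=.
apply: leq_sum => s _.
have H := @count_rep C (rcomp_seq g s) xs hxs. apply: leq_trans H _.
rewrite leq_add2r.
apply: leq_trans (@rdeg_rcomp_seq C _ g s (rid C)) _.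
by rewrite rdeg_rid mul1n.
Qed.
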